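(* Let $\Gamma^{\mathsf b}$ be a base game. There exists $\delta>0$ such that for every $\varepsilon\in(0,\delta)$, in the money-burning $\varepsilon$-game $\Gamma^{\mathsf{mb}}[\varepsilon]$ one has $\zeta(\mathbb U^\infty(S))=\{((0,a^*_{\mathrm a}),a^*_{\mathrm b})\}$, i.e., every strategy profile surviving Iterative Conditional B-Dominance leads to Ann burning nothing and the profile $(a^*_{\mathrm a},a^*_{\mathrm b})$ being played.
   Context: Base game: a two-player strategic game $\Gamma^{\mathsf b}=\langle\{\mathrm a,\mathrm b\},(A_j,v_j)_{j}\rangle$ with finite action sets $A_{\mathrm a},A_{\mathrm b}$ and utility functions $v_j:A_{\mathrm a}\times A_{\mathrm b}\to\mathbb R$, for which there exist $a^*_{\mathrm a}\in A_{\mathrm a}$, $a^*_{\mathrm b}\in A_{\mathrm b}$ with $v_{\mathrm a}(a^*_{\mathrm a},a^*_{\mathrm b})>v_{\mathrm a}(a_{\mathrm a},a_{\mathrm b})$ for every $(a_{\mathrm a},a_{\mathrm b})\neq(a^*_{\mathrm a},a^*_{\mathrm b})$, and $v_{\mathrm b}(a^*_{\mathrm a},a^*_{\mathrm b})>v_{\mathrm b}(a^*_{\mathrm a},a_{\mathrm b})$ for every $a_{\mathrm b}\neq a^*_{\mathrm b}$. Money-burning $\varepsilon$-game ($\varepsilon>0$): Ann first publicly chooses $n\in\mathbb N=\{0,1,2,\dots\}$ (burning $\varepsilon n$), then Ann and Bob simultaneously play the base game. Ann's strategies are $S_{\mathrm a}=\mathbb N\times A_{\mathrm a}$, Bob's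 are $S_{\mathrm b}=A_{\mathrm b}^{\mathbb N}$ (functions $s_{\mathrm b}:\mathbb N\to A_{\mathrm b}$), $S=S_{\mathrm a}\times S_{\mathrm b}$; the outcome of $((n,a_{\mathrm a}),s_{\mathrm b})$ is $\zeta((n,a_{\mathrm a}),s_{\mathrm b})=((n,a_{\mathrm a}),s_{\mathrm b}(n))$; Ann's preference over outcomes is represented by $((n,a_{\mathrm a}),a_{\mathrm b})\mapsto v_{\mathrm a}(a_{\mathrm a},a_{\mathrm b})-\varepsilon n$ and Bob's by $((n,a_{\mathrm a}),a_{\mathrm b})\mapsto v_{\mathrm b}(a_{\mathrm a},a_{\mathrm b})$ (write $\succsim_j,\succ_j$). Information sets: Ann has the root (reached by all profiles) and, for each $n$, the history $n$; Bob has, for each $n\in\mathbb N$, the history $n$. The profiles reaching history $n$ are $(\{n\}\times A_{\mathrm a})\times S_{\mathrm b}$. For a restriction $R=R_{\mathrm a}\times R_{\mathrm b}\subseteq S$ (nonempty) and an information set $h$ of player $i$ that strategy $s_i$ reaches, let $R^i(h)=R_i(h)\times R_{-i}(h)$ be the profiles in $R$ reaching $h$. Dominance: for $P=P_i\times P_{-i}$, $s_i\in P_i$ is weakly dominated relative to $P$ by $t_i\in P_i$ if $\zeta(t_i,s_{-i})\succsim_i\zeta(s_i,s_{-i})$ for all $s_{-i}\in P_{-i}$ with $\succ_i$ for some; B-dominated w.r.t. $P$ if for every nonempty $Q_{-i}\subseteq P_{-i}$ it is weakly dominated relative to $P_i\times Q_{-i}$ by some strategy in $P_i$. $s_i\in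 R_i$ is conditionally B-dominated w.r.t. $R$ if for some information set $h$ of $i$ reached by $s_i$ with $R^i(h)\ne\emptyset$, $s_i$ is B-dominated w.r.t. $R^i(h)$. $\mathbb U_i(R)$ is the set of $s_i\in R_i$ not conditionally B-dominated w.r.t. $R$, $\mathbb U(R)=\mathbb U_{\mathrm a}(R)\times\mathbb U_{\mathrm b}(R)$; $\mathbb U^0(S)=S$, $\mathbb U^n(S)=\mathbb U(\mathbb U^{n-1}(S))$, $\mathbb U^\infty(S)=\bigcap_{\ell\ge0}\mathbb U^\ell(S)$. *)

(* Defs.v *)
From mathcomp Require Import all_boot.
From Stdlib Require Import Reals.
Set Implicit Arguments.
Unset Strict Implicit.
Unset Printing Implicit Defensive.
Local Open Scope R_scope.

Definition wdominated {X Y : Type} (u : X -> Y -> R)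
  (P : X -> Prop) (Q : Y -> Prop) (s t : X) : Prop :=
  P t /\ (forall y, Q y -> u s y <= u t y) /\ (exists y, Q y /\ u s y < u t y).

Definition Bdominated {X Y : Type} (u : X -> Y -> R)
  (P : X -> Prop) (Q : Y -> Prop) (s : X) : Prop :=
  P s /\
  forall Q' : Y -> Prop, (exists y, Q' y) -> (forall y, Q' y -> Q y) ->
    exists t, wdominated u P Q' s t.

Definition SA (A : finType) : Type := (nat * A)%type.
Definition SB (B : finType) : Type := nat -> B.

Definition zeta {A B : finType} (sa : SA A) (sb : SB B) : (SA A * B)%type :=
  (sa, sb (fst sa)).

Definition uAnn {A B : finType} (va : A -> B -> R) (eps : R)
  (sa : SA A) (sb : SB B) : R :=
  va (snd (fst (zeta sa sb))) (snd (zeta sa sb)) - eps * INR (fst sa).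
Definition uBob {A B : finType} (vb : A -> B -> R)
  (sb : SB B) (sa : SA A) : R :=
  vb (snd (fst (zeta sa sb))) (snd (zeta sa sb)).

(* Histories: [None] = the root, [Some n] = history n (Ann burnt n).
   Ann's information sets: all histories; Bob's: [Some n] for n in nat. *)
Definition reaches {A B : finType} (h : option nat) (sa : SA A) (sb : SB B) : Prop :=
  match h with None => True | Some n => fst sa = n end.

Definition restr (A B : finType) : Type := ((SA A -> Prop) * (SB B -> Prop))%type.

Definition RA_h {A B : finType} (Rr : restr A B) (h : option nat) : SA A -> Prop :=
  fun x => Rr.1 x /\ exists y, Rr.2 y /\ reaches h x y.
Definition RB_h {A B : finType} (Rr : restr A B) (h : option nat) : SB B -> Prop :=
  fun y => Rr.2 y /\ exists x, Rr.1 x /\ reaches h x y.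

Definition Rh_nonempty {A B : finType} (Rr : restr A B) (h : option nat) : Prop :=
  exists x y, Rr.1 x /\ Rr.2 y /\ reaches h x y.

Definition condBdomA {A B : finType} (va : A -> B -> R) (eps : R)
  (Rr : restr A B) (s : SA A) : Prop :=
  exists h : option nat,
    (exists y : SB B, reaches h s y) /\ Rh_nonempty Rr h /\
    Bdominated (uAnn va eps) (RA_h Rr h) (RB_h Rr h) s.

Definition condBdomB {A B : finType} (vb : A -> B -> R)
  (Rr : restr A B) (s : SB B) : Prop :=
  exists n : nat,
    (exists x : SA A, reaches (Some n) x s) /\ Rh_nonempty Rr (Some n) /\
    Bdominated (uBob vb) (RB_h Rr (Some n)) (RA_h Rr (Some n)) s.

Definition Uop {A B : finType} (va vb : A -> B -> R) (eps : R)
  (Rr : restr A B) : restr A B :=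
  (fun s => Rr.1 s /\ ~ condBdomA va eps Rr s,
   fun s => Rr.2 s /\ ~ condBdomB vb Rr s).

Definition fullS (A B : finType) : restr A B := (fun _ => True, fun _ => True).

Fixpoint Uiter {A B : finType} (va vb : A -> B -> R) (eps : R) (k : nat) : restr A B :=
  match k with
  | 0 => fullS A B
  | k'.+1 => Uop va vb eps (Uiter va vb eps k')
  end.

Definition Uinf {A B : finType} (va vb : A -> B -> R) (eps : R) : restr A B :=
  (fun s => forall k, (Uiter va vb eps k).1 s,
   fun s => forall k, (Uiter va vb eps k).2 s).

(* Main.v *)
Require Import Defs.
From mathcomp Require Import all_boot.
From Stdlib Require Import Reals Lra Classical IndefiniteDescription.
Local Open Scope R_scope.

Lemma list_max (T : eqType) (f : T -> R) (P : T -> Prop) (l : seq T) :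
  (exists x, x \in l /\ P x) ->
  exists x, P x /\ forall y, y \in l -> P y -> f y <= f x.
Proof.
elim: l => [|a l IH] [x [Hx Px]]; first by rewrite in_nil in Hx.
destruct (classic (exists x, x \in l /\ P x)) as [He|He].
- have [z [Pz Hz]] := IH He.
  destruct (classic (P a)) as [Pa|Pa].
  + destruct (Rle_lt_dec (f a) (f z)) as [Hle|Hlt].
    * exists z; split => // y; rewrite in_cons => /orP [/eqP ->|Hy] Py //.
      by apply: Hz.
    * exists a; split => // y; rewrite in_cons => /orP [/eqP ->|Hy] Py.
      { by apply Rle_refl. }
      have := Hz y Hy Py; lra.
  + exists z; split => // y; rewrite in_cons => /orP [/eqP ->|Hy] Py //.
    by apply: Hz.
- have xa : x = a.
  { move: Hx; rewrite in_cons => /orP [/eqP //|Hx]. exfalso; apply: He; by exists x. }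
  subst x. exists a; split => // y; rewrite in_cons => /orP [/eqP ->|Hy] Py.
  { by apply Rle_refl. }
  exfalso; apply: He; by exists y.
Qed.

Lemma fin_max (T : finType) (f : T -> R) (P : T -> Prop) :
  (exists x, P x) -> exists x, P x /\ forall y, P y -> f y <= f x.
Proof.
move=> [x Px].
have [z [Pz Hz]] := @list_max T f P (enum T) (ex_intro _ x (conj (mem_enum T x) Px)).
exists z; split => // y Py; apply: Hz => //; by rewrite mem_enum.
Qed.

Lemma stabilize (T : finType) (Q : nat -> T -> Prop)
  (anti : forall k x, Q k.+1 x -> Q k x) (ne : forall k, exists x, Q k x) :
  exists x, forall k, Q k x.
Proof.
apply: NNPP => H.
have H' : forall x, exists k, ~ Q k x.
{ move=> x; apply: NNPP => H2; apply: H; exists x => k.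
  apply: NNPP => H3; apply: H2; by exists k. }
have anti' : forall j k x, (j <= k)%nat -> Q k x -> Q j x.
{ move=> j k x /subnK <-; elim: (k - j)%nat => [|d IHd] //= Hq.
  apply: IHd; by apply: anti. }
have L : forall l : seq T, exists K, forall x, x \in l -> ~ Q K x.
{ elim=> [|a l [K HK]]; first by exists 0%nat.
  have [ka Hka] := H' a.
  exists (maxn K ka) => x; rewrite in_cons => /orP [/eqP ->|Hx] Hq.
  - apply: Hka; apply: (anti' _ (maxn K ka)) => //; exact: leq_maxr.
  - apply: (HK x Hx); apply: (anti' _ (maxn K ka)) => //; exact: leq_maxl. }
have [K HK] := L (enum T).
have [x Hx] := ne K.
by apply: (HK x); [rewrite mem_enum|].
Qed.

Definition upd {B : finType} (y : SB B) (n : nat) (b : B) : SB B :=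
  fun m => if Nat.eq_dec m n then b else y m.

Lemma reaches_indep {A B : finType} h (x : SA A) (y y' : SB B) :
  reaches h x y -> reaches h x y'.
Proof. by case: h. Qed.

Lemma uBobE {A B : finType} (vb : A -> B -> R) y x : uBob vb y x = vb x.2 (y x.1).
Proof. by []. Qed.
Lemma uAnnE {A B : finType} (va : A -> B -> R) eps x y :
  uAnn va eps x y = va x.2 (y x.1) - eps * INR x.1.
Proof. by []. Qed.

Lemma Bdom_transfer {A B : finType} (vb : A -> B -> R) (Rr : restr A B) m y y' :
  Rr.2 y' -> y m = y' m ->
  Bdominated (uBob vb) (RB_h Rr (Some m)) (RA_h Rr (Some m)) y ->
  Bdominated (uBob vb) (RB_h Rr (Some m)) (RA_h Rr (Some m)) y'.
Proof.
move=> Y' E [[Py [x [Xx Rx]]] Hd]; split.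
{ split => //; exists x; split => //. }
move=> Q' ne sub; have [t [Pt [Hle [x0 [Qx0 Hlt]]]]] := Hd Q' ne sub.
have fx : forall x, Q' x -> x.1 = m.
{ by move=> x1 /sub [_ [y1 [_ R1]]]. }
exists t; split => //; split.
- move=> x1 Q1; have h := Hle x1 Q1; rewrite !uBobE (fx _ Q1) in h *; by rewrite -E.
- exists x0; split => //; move: Hlt; rewrite !uBobE (fx _ Qx0) E //.
Qed.

Lemma prodY {A B : finType} (va vb : A -> B -> R) eps k y :
  (forall m, exists y', (Uiter va vb eps k).2 y' /\ y' m = y m) ->
  (Uiter va vb eps k).2 y.
Proof.
elim: k y => [|k IH] y H //=.
split.
{ apply: IH => m; have [y' [[Y' _] E]] := H m; by exists y'. }
move=> [m [_ [Hne Hd]]].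
have [y' [[Y' N'] E]] := H m.
apply: N'; exists m; split.
{ case: Hne => [x [y0 [_ [_ Rx]]]]; exists x; exact: Rx. }
split => //.
apply: (Bdom_transfer _ _ _ y) => //.
Qed.

Lemma Ynonempty {A B : finType} (va vb : A -> B -> R) eps (b0 : B) k :
  exists y, (Uiter va vb eps k).2 y.
Proof.
elim: k => [|k [y0 Y0]]; first by exists (fun _ => b0).
set X := (Uiter va vb eps k).1; set Y := (Uiter va vb eps k).2.
pose Pm m b := (exists y', Y y' /\ y' m = b) /\
   ((exists a, X (m, a)) -> exists a0, X (m, a0) /\
       forall y', Y y' -> vb a0 (y' m) <= vb a0 b).
have ex : forall m, exists b, Pm m b.
{ move=> m; destruct (classic (exists a, X (m, a))) as [[a0 Ha0]|Hn].
  - have [b [[y1 [Y1 E1]] Hb]] := @fin_max B (vb a0) (fun b => exists y', Y y' /\ y' m = b)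
       (ex_intro _ (y0 m) (ex_intro _ y0 (conj Y0 erefl))).
    exists b; split; first by exists y1.
    move=> _; exists a0; split => // y' Y'; apply: Hb; by exists y'.
  - exists (y0 m); split; first by exists y0.
    by move=> H; exfalso; apply: Hn. }
pose f m := proj1_sig (constructive_indefinite_description _ (ex m)).
have Hf : forall m, Pm m (f m) := fun m => proj2_sig (constructive_indefinite_description _ (ex m)).
exists f; split.
{ apply: prodY => m; have [[y' [Y' E]] _] := Hf m; by exists y'. }
move=> [m [_ [[x [y1 [Xx [Yy1 Rx]]]] [Py Hd]]]].
have [_ Hm] := Hf m.
have [a0 [Xa0 Hmax]] : exists a0, X (m, a0) /\ forall y', Y y' -> vb a0 (y' m) <= vb a0 (f m).
{ apply: Hm; exists x.2; move: Xx Rx; case: x => [xn xa] /= Xx <-; exact: Xx. }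
have [t [Pt [_ [x0 [Qx0 Hlt]]]]] := Hd (fun x => x = (m, a0)) (ex_intro _ _ erefl)
  (fun x (e : x = (m, a0)) => match esym e with erefl => conj Xa0 (ex_intro _ y1 (conj Yy1 erefl)) end).
subst x0; move: Hlt; rewrite !uBobE /=.
case: Pt => Yt _; have := Hmax t Yt; lra.
Qed.

Lemma upd_eq {B : finType} (y : SB B) n b : upd y n b n = b.
Proof. rewrite /upd; by case: Nat.eq_dec. Qed.
Lemma upd_neq {B : finType} (y : SB B) n b m : m <> n -> upd y n b m = y m.
Proof. rewrite /upd; by case: Nat.eq_dec. Qed.

Lemma prod_upd {A B : finType} (va vb : A -> B -> R) eps k y y1 n :
  (Uiter va vb eps k).2 y -> (Uiter va vb eps k).2 y1 ->
  (Uiter va vb eps k).2 (upd y n (y1 n)).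
Proof.
move=> Y Y1; apply: prodY => m; rewrite /upd; destruct (Nat.eq_dec m n) as [e|ne].
- by subst m; exists y1.
- by exists y.
Qed.

Lemma I2 {A B : finType} (va vb : A -> B -> R) eps (aA : A) (aB : B)
  (hB : forall b : B, b <> aB -> vb aA b < vb aA aB) k n :
  (Uiter va vb eps k).1 (n, aA) ->
  exists y, (Uiter va vb eps k).2 y /\ y n = aB.
Proof.
elim: k => [|k IH] H; first by exists (fun _ => aB).
have [y1 [Y1 E1]] := IH H.1.
have [y0 [Y0 N0]] := Ynonempty va vb eps aB k.+1.
exists (upd y0 n aB); split; last by rewrite upd_eq.
split.
{ rewrite -E1; exact: prod_upd. }
move=> [m [_ [Hne Hd]]].
destruct (Nat.eq_dec m n) as [->|Hmn].
- case: Hd => [[_ [_ [_ _]]] Hd].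
  have [t [[Yt _] [_ [x0 [Qx0 Hlt]]]]] := Hd (fun x => x = (n, aA)) (ex_intro _ _ erefl)
    (fun x (e : x = (n, aA)) => match esym e with erefl => conj H.1 (ex_intro _ y1 (conj Y1 erefl)) end).
  subst x0; move: Hlt; rewrite !uBobE /= upd_eq.
  destruct (classic (t n = aB)) as [->|Ht]; first lra.
  have := hB _ Ht; lra.
- apply: N0; exists m; split.
  { case: Hne => [x [y2 [_ [_ Rx]]]]; exists x; exact: Rx. }
  split => //.
  apply: (Bdom_transfer _ _ _ (upd y0 n aB)) => //.
  by rewrite upd_neq.
Qed.

Lemma vmax {A B : finType} (va : A -> B -> R) (aA : A) (aB : B)
  (hA : forall (a : A) (b : B), (a, b) <> (aA, aB) -> (va a b < va aA aB)%R) a b :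
  va a b <= va aA aB.
Proof.
destruct (classic ((a, b) = (aA, aB))) as [E|E].
- case: E => -> ->; lra.
- have := hA _ _ E; lra.
Qed.

Lemma I1 {A B : finType} (va vb : A -> B -> R) eps (aA : A) (aB : B)
  (hA : forall (a : A) (b : B), (a, b) <> (aA, aB) -> (va a b < va aA aB)%R)
  (hB : forall b : B, b <> aB -> vb aA b < vb aA aB) (he : 0 < eps) k :
  (Uiter va vb eps k).1 (0%nat, aA).
Proof.
elim: k => [|k IH] //=; split => //.
move=> [h [[y0 Rh0] [Hne [Ps Hd]]]].
have [y1 [Y1 E1]] := I2 va vb eps aA aB hB k 0 IH.
have [t [[Xt _] [_ [x0 [Qx0 Hlt]]]]] := Hd (fun y => y = y1) (ex_intro _ _ erefl)
  (fun y (e : y = y1) => match esym e with erefl =>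
     conj Y1 (ex_intro _ (0%nat, aA) (conj IH (reaches_indep _ _ _ _ Rh0))) end).
subst x0; move: Hlt; rewrite !uAnnE /= E1.
have := vmax va aA aB hA t.2 (y1 t.1).
have := pos_INR t.1.
have : 0 <= eps * INR t.1 by apply: Rmult_le_pos; [lra| apply: pos_INR].
lra.
Qed.

Lemma strictElim {A B : finType} (va vb : A -> B -> R) eps (b0 : B) k s t :
  (Uiter va vb eps k).1 s -> (Uiter va vb eps k).1 t ->
  (forall y, (Uiter va vb eps k).2 y -> uAnn va eps s y < uAnn va eps t y) ->
  ~ (Uiter va vb eps k.+1).1 s.
Proof.
move=> Xs Xt H [_ N]; apply: N.
have [y0 Y0] := Ynonempty va vb eps b0 k.
exists None; split; first by exists y0.
split; first by exists s, y0.
split; first by split => //; exists y0.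
move=> Q' [y1 Q1] sub; exists t; split.
{ split => //; by exists y0. }
split.
- move=> y Qy; have [Yy _] := sub y Qy; apply: Rlt_le; exact: H.
- exists y1; split => //; have [Yy _] := sub y1 Q1; exact: H.
Qed.

Lemma ElimAA {A B : finType} (va vb : A -> B -> R) eps (aA : A) (aB : B)
  (hA : forall (a : A) (b : B), (a, b) <> (aA, aB) -> (va a b < va aA aB)%R)
  (hB : forall b : B, b <> aB -> vb aA b < vb aA aB) k m :
  (Uiter va vb eps k).1 (m, aA) -> ~ (Uiter va vb eps k.+1).1 (m, aA) ->
  exists t, (Uiter va vb eps k).1 t /\ forall y, (Uiter va vb eps k).2 y ->
     va aA aB - eps * INR m <= uAnn va eps t y.
Proof.
move=> Xs Ns.
have Hc : condBdomA va eps (Uiter va vb eps k) (m, aA).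
{ apply: NNPP => Hc; apply: Ns; by split. }
case: Hc => [h [[y0 Rh0] [Hne [Ps Hd]]]].
have [y1 [Y1 E1]] := I2 va vb eps aA aB hB k m Xs.
set Rr := Uiter va vb eps k.
have inRB : forall y, Rr.2 y -> RB_h Rr h y.
{ move=> y Yy; split => //; exists (m, aA); split => //; exact: (reaches_indep _ _ _ _ Rh0). }
have [t [[Xt _] [Hle [yy [[Qyy Eyy] Hlt]]]]] :=
  Hd (fun y => RB_h Rr h y /\ y m = aB) (ex_intro _ y1 (conj (inRB _ Y1) E1))
     (fun y H => H.1).
exists t; split => //.
destruct (Nat.eq_dec t.1 m) as [Etm|Ntm].
- exfalso; move: Hlt; rewrite !uAnnE /= Etm Eyy.
  destruct (classic ((t.2, aB) = (aA, aB))) as [E|E].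
  + case: E => ->; lra.
  + have := hA _ _ E; lra.
- move=> y Yy.
  have Yu : Rr.2 (upd y m aB) by rewrite -E1; apply: prod_upd.
  have := Hle (upd y m aB) (conj (inRB _ Yu) (upd_eq _ _ _)).
  rewrite !uAnnE /= upd_eq upd_neq //.
Qed.

Lemma O2 {A B : finType} (va vb : A -> B -> R) eps (aA : A) (aB : B)
  (hB : forall b : B, b <> aB -> vb aA b < vb aA aB) k n :
  (forall a, (Uiter va vb eps k).1 (n, a) -> a = aA) ->
  (Uiter va vb eps k).1 (n, aA) ->
  forall y, (Uiter va vb eps k.+1).2 y -> y n = aB.
Proof.
move=> good Xn y [Yy Hn].
apply: NNPP => Hyn; apply: Hn.
have [y1 [Y1 E1]] := I2 va vb eps aA aB hB k n Xn.
set Rr := Uiter va vb eps k.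
exists n; split; first by exists (n, aA).
split; first by exists (n, aA), y.
split; first by split => //; exists (n, aA).
move=> Q' [x0 Q0] sub.
have Yu : Rr.2 (upd y n aB) by rewrite -E1; apply: prod_upd.
exists (upd y n aB); split.
{ split => //; by exists (n, aA). }
have key : forall x, Q' x -> uBob vb y x < uBob vb (upd y n aB) x.
{ move=> [xn xa] Qx; have [Xx [y2 [_ Rx]]] := sub _ Qx.
  simpl in Rx; subst xn.
  have := good _ Xx => ->.
  rewrite !uBobE /= upd_eq; exact: hB. }
split.
- move=> x Qx; apply: Rlt_le; exact: key.
- exists x0; split => //; exact: key.
Qed.

Lemma find_round {A B : finType} (va vb : A -> B -> R) eps s K :
  ~ (Uiter va vb eps K).1 s ->
  exists j, (Uiter va vb eps j).1 s /\ ~ (Uiter va vb eps j.+1).1 s.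
Proof.
elim: K => [|K IH] N; first by exfalso; apply: N.
destruct (classic ((Uiter va vb eps K).1 s)) as [H|H].
- by exists K.
- exact: IH.
Qed.

Definition Lev {A B : finType} (va vb : A -> B -> R) eps k L :=
  exists t, (Uiter va vb eps k).1 t /\
    forall y, (Uiter va vb eps k).2 y -> L <= uAnn va eps t y.

Lemma step {A B : finType} (va vb : A -> B -> R) eps (aA : A) (aB : B)
  (hA : forall (a : A) (b : B), (a, b) <> (aA, aB) -> (va a b < va aA aB)%R)
  (hB : forall b : B, b <> aB -> vb aA b < vb aA aB) g
  (hg : forall a b, a <> aA -> va a b <= va aA aB - g)
  (he : 0 < eps) (hlt : eps < g) k n :
  Lev va vb eps k (va aA aB - eps * INR n.+1) ->
  exists k', Lev va vb eps k' (va aA aB - eps * INR n).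
Proof.
move=> [t [Xt Ht]].
destruct (classic ((Uiter va vb eps k.+1).1 (n, aA))) as [H1|H1].
- have good : forall a, (Uiter va vb eps k.+1).1 (n, a) -> a = aA.
  { move=> a Ha; apply: NNPP => Na.
    apply: (strictElim va vb eps aB k (n, a) t Ha.1 Xt _ Ha) => y Yy.
    have := Ht y Yy; have := hg a (y n) Na; rewrite !uAnnE S_INR /=; lra. }
  destruct (classic ((Uiter va vb eps k.+2).1 (n, aA))) as [H2|H2].
  + exists k.+2, (n, aA); split => // y Yy.
    rewrite uAnnE /= (O2 va vb eps aA aB hB k.+1 n good H1 y Yy); lra.
  + exists k.+1; exact: (ElimAA va vb eps aA aB hA hB).
- have [j [Xj Nj]] := find_round va vb eps _ _ H1.
  exists j; exact: (ElimAA va vb eps aA aB hA hB).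
Qed.

Lemma down {A B : finType} (va vb : A -> B -> R) eps (aA : A) (aB : B)
  (hA : forall (a : A) (b : B), (a, b) <> (aA, aB) -> (va a b < va aA aB)%R)
  (hB : forall b : B, b <> aB -> vb aA b < vb aA aB) g
  (hg : forall a b, a <> aA -> va a b <= va aA aB - g)
  (he : 0 < eps) (hlt : eps < g) n :
  (exists k, Lev va vb eps k (va aA aB - eps * INR n)) ->
  exists k, Lev va vb eps k (va aA aB).
Proof.
elim: n => [|n IH] [k Hk].
- exists k; move: Hk; rewrite /= Rmult_0_r Rminus_0_r //.
- apply: IH; exact: (step va vb eps aA aB hA hB g hg he hlt k n Hk).
Qed.

Lemma final {A B : finType} (va vb : A -> B -> R) eps (aA : A) (aB : B)
  (hA : forall (a : A) (b : B), (a, b) <> (aA, aB) -> (va a b < va aA aB)%R)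
  g (hgp : 0 < g)
  (hg : forall a b, a <> aA -> va a b <= va aA aB - g)
  (he : 0 < eps) k :
  Lev va vb eps k (va aA aB) ->
  forall s, (Uiter va vb eps k.+1).1 s -> s = (0%nat, aA).
Proof.
move=> [t [Xt Ht]] [m a] Hs.
apply: NNPP => Ns.
apply: (strictElim va vb eps aB k (m, a) t Hs.1 Xt _ Hs) => y Yy.
have := Ht y Yy; rewrite !uAnnE /=.
have Hm : 0 <= eps * INR m by apply: Rmult_le_pos; [lra|apply: pos_INR].
destruct (classic (a = aA)) as [Ea|Na].
- subst a; destruct m as [|m]; first by exfalso; apply: Ns.
  have : 0 < eps * INR m.+1 by apply: Rmult_lt_0_compat => //; apply: lt_0_INR; apply/ltP.
  have := vmax va aA aB hA aA (y m.+1); lra.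
- have := hg a (y m) Na; lra.
Qed.

Theorem proposition10 (A B : finType) (va vb : A -> B -> R)
  (aA : A) (aB : B)
  (hA : forall (a : A) (b : B), (a, b) <> (aA, aB) -> (va a b < va aA aB)%R)
  (hB : forall b : B, b <> aB -> (vb aA b < vb aA aB)%R) :
  exists delta : R, (0 < delta)%R /\
    forall eps : R, (0 < eps)%R -> (eps < delta)%R ->
      forall o : (SA A * B)%type,
        (exists (sa : SA A) (sb : SB B),
            (Uinf va vb eps).1 sa /\ (Uinf va vb eps).2 sb /\ zeta sa sb = o)
        <-> o = ((0%nat, aA), aB).
Proof.
have [g [hgp hg]] : exists g, (0 < g)%R /\
    forall a b, a <> aA -> (va a b <= va aA aB - g)%R.
{ destruct (classic (exists p : (A * B)%type, p <> (aA, aB))) as [Hp|Hp].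
  - have [[a2 b2] [P2 M2]] := @fin_max _ (fun p : (A * B)%type => va p.1 p.2) _ Hp.
    exists (va aA aB - va a2 b2)%R; split.
    + have := hA a2 b2 P2; lra.
    + move=> a b Na.
      have : (a, b) <> (aA, aB) by case.
      move=> /M2 /=; lra.
  - exists 1%R; split; first lra.
    move=> a b Na; exfalso; apply: Hp; exists (a, b); by case. }
have [bm [_ Hbm]] := @fin_max B (fun b => - va aA b)%R (fun _ => True) (ex_intro _ aB I).
exists g; split => // eps he hlt o.
have Hall : exists K, Lev va vb eps K (va aA aB).
{ have [n0 Hn0] := INR_archimed eps (va aA aB - va aA bm)%R he.
  apply: (down va vb eps aA aB hA hB g hg he hlt n0).
  exists 0%nat, (0%nat, aA); split => // y _.
  rewrite uAnnE /= Rmult_0_r Rminus_0_r.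
  have := Hbm (y 0%nat) I; lra. }
have [K HK] := Hall.
have Fin := final va vb eps aA aB hA g hgp hg he K HK.
split.
- move=> [sa [sb [Hsa [Hsb <-]]]].
  have Esa : sa = (0%nat, aA) := Fin sa (Hsa K.+1).
  subst sa.
  have good : forall a, (Uiter va vb eps K.+1).1 (0%nat, a) -> a = aA.
  { by move=> a /Fin [->]. }
  have := O2 va vb eps aA aB hB K.+1 0%nat good (I1 va vb eps aA aB hA hB he _) sb (Hsb K.+2).
  by rewrite /zeta /= => ->.
- move=> ->.
  have comp : forall m, exists b, (forall k, exists y, (Uiter va vb eps k).2 y /\ y m = b)
                                  /\ (m = 0%nat -> b = aB).
  { move=> m; destruct (Nat.eq_dec m 0) as [E|Nm].
    - subst m; exists aB; split => // k.
      exact: (I2 va vb eps aA aB hB k 0%nat (I1 va vb eps aA aB hA hB he k)).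
    - have [b Hb] : exists b, forall k, exists y, (Uiter va vb eps k).2 y /\ y m = b.
      { apply: stabilize.
        - move=> k x [y [Yy Ey]]; exists y; split => //; exact: Yy.1.
        - move=> k; have [y Yy] := Ynonempty va vb eps aB k; by exists (y m), y. }
      exists b; split => // E; by exfalso. }
  pose f m := proj1_sig (constructive_indefinite_description _ (comp m)).
  have Hf : forall m, _ := fun m => proj2_sig (constructive_indefinite_description _ (comp m)).
  exists (0%nat, aA), f; split; [|split].
  + move=> k /=; exact: (I1 va vb eps aA aB hA hB he k).
  + move=> k /=; apply: prodY => m; have [H _] := Hf m; exact: H k.
  + rewrite /zeta /=; have [_ H] := Hf 0%nat; by rewrite /f (H erefl).
Qed.
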